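(* For the reduced system $\dot x=G(x)$ (context), with the stated parameter inequalities, let $J(x)=\partial G/\partial x$ be the Jacobian at $x=(\mu_{34},s,\mu_{200},z)\in(0,\infty)^4$, with indices ordered as $(\mu_{34},s,\mu_{200},z)$. Then, for every $x\in(0,\infty)^4$: $J_{13}=J_{23}=J_{24}=J_{31}=J_{41}=0$; $J_{12}<0$, $J_{14}<0$, $J_{32}<0$, $J_{34}<0$; $J_{21}=\partial\dot s/\partial\mu_{34}<0$, $J_{43}=\partial \dot z/\partial\mu_{200}<0$; $J_{42}=\partial\dot z/\partial s>0$. In particular, with $\sigma=(-1,1,-1,1)$ and $\Sigma=\mathrm{diag}(\sigma)$, the matrix $\Sigma J(x)\Sigma$ is Metzler (all off-diagonal entries nonnegative) for every $x\in(0,\infty)^4$, and $J(x)$ is irreducible for every $x\in(0,\infty)^4$.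
   Context: All of the following are positive real parameters: $A_s, A_z, E_{34}, E_{200}, E_S, E_Z, \beta_{34}, \beta_{-34}, \beta_{200}, \beta_{-200}, \gamma_s, \gamma_z, c_s, c_{-s}, c_z, c_{-z}, \beta_s, \beta_{s1}, \beta_{s2}, \beta_z, \beta_{z1}, \beta_{z2}, k_s, k_{s1}, k_{s2}, k_{-s}, k_z, k_{z1}, k_{z2}, k_{-z}, \delta_z$. They satisfy $\beta_s<\beta_{s1}<\beta_{s2}$, $\beta_z<\beta_{z1}<\beta_{z2}$, $k_s>k_{s1}>k_{s2}$ and $k_z>k_{z1}>k_{z2}$. For $\rho\in\{s,z\}$ define $e_{\rho1}=\beta_{\rho1}\beta_{\rho2}+(\beta_{\rho1}+\beta_{\rho2})c_{-\rho}+c_{-\rho}^2$, $e_{\rho2}=c_\rho(\beta_{\rho2}+c_{-\rho})$, $e_{\rho3}=\beta_\rho\beta_{\rho2}+\beta_{\rho1}\beta_{\rho2}+\beta_{\rho1}c_{-\rho}$, $\Delta_\rho(\mu)=\beta_{\rho2}c_\rho^2\mu^2+e_{\rho3}c_\rho\mu+e_{\rho1}\beta_\rho$, and $N_\rho(\mu)=\dfrac{k_\rho(\beta_{\rho2}c_\rho\mu+e_{\rho1})+k_{\rho1}e_{\rho2}\mu+k_{\rho2}c_\rho^2\mu^2}{\Delta_\rho(\mu)}$ for $\mu\ge 0$. The reduced system $\dot x=G(x)$, $x=(\mu_{34},s,\mu_{200},z)$, is $\dot\mu_{34}=\dfrac{\beta_{34}E_{34}A_sA_z}{(s^2+A_s)(z^2+A_z)}-\beta_{-34}\mu_{34}$,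 $\dot s=\dfrac{\gamma_sE_SA_s}{s^2+A_s}N_s(\mu_{34})-k_{-s}s$, $\dot\mu_{200}=\dfrac{\beta_{200}E_{200}A_sA_z}{(s^2+A_s)(z^2+A_z)}-\beta_{-200}\mu_{200}$, $\dot z=\delta_z+\dfrac{\gamma_zE_Zs^2z^2}{(s^2+A_s)(z^2+A_z)}N_z(\mu_{200})-k_{-z}z$. *)

(* Defs.v *)
From Stdlib Require Import Reals Lra Arith.
Open Scope R_scope.

Record params := mkParams {
  A_s : R; A_z : R; E_34 : R; E_200 : R; E_S : R; E_Z : R;
  beta_34 : R; beta_m34 : R; beta_200 : R; beta_m200 : R;
  gamma_s : R; gamma_z : R; c_s : R; c_ms : R; c_z : R; c_mz : R;
  beta_s : R; beta_s1 : R; beta_s2 : R; beta_z : R; beta_z1 : R; beta_z2 : R;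
  k_s : R; k_s1 : R; k_s2 : R; k_ms : R; k_z : R; k_z1 : R; k_z2 : R; k_mz : R;
  delta_z : R }.

Definition valid_params (p : params) : Prop :=
  0 < A_s p /\ 0 < A_z p /\ 0 < E_34 p /\ 0 < E_200 p /\ 0 < E_S p /\ 0 < E_Z p /\
  0 < beta_34 p /\ 0 < beta_m34 p /\ 0 < beta_200 p /\ 0 < beta_m200 p /\
  0 < gamma_s p /\ 0 < gamma_z p /\ 0 < c_s p /\ 0 < c_ms p /\ 0 < c_z p /\ 0 < c_mz p /\
  0 < beta_s p /\ 0 < beta_s1 p /\ 0 < beta_s2 p /\
  0 < beta_z p /\ 0 < beta_z1 p /\ 0 < beta_z2 p /\
  0 < k_s p /\ 0 < k_s1 p /\ 0 < k_s2 p /\ 0 < k_ms p /\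
  0 < k_z p /\ 0 < k_z1 p /\ 0 < k_z2 p /\ 0 < k_mz p /\ 0 < delta_z p /\
  beta_s p < beta_s1 p /\ beta_s1 p < beta_s2 p /\
  beta_z p < beta_z1 p /\ beta_z1 p < beta_z2 p /\
  k_s1 p < k_s p /\ k_s2 p < k_s1 p /\
  k_z1 p < k_z p /\ k_z2 p < k_z1 p.

Definition e1 (c cm b b1 b2 : R) : R := b1 * b2 + (b1 + b2) * cm + cm ^ 2.
Definition e2 (c cm b b1 b2 : R) : R := c * (b2 + cm).
Definition e3 (c cm b b1 b2 : R) : R := b * b2 + b1 * b2 + b1 * cm.
Definition Delta (c cm b b1 b2 mu : R) : R :=
  b2 * c ^ 2 * mu ^ 2 + e3 c cm b b1 b2 * c * mu + e1 c cm b b1 b2 * b.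
Definition Nfun (k k1 k2 c cm b b1 b2 mu : R) : R :=
  (k * (b2 * c * mu + e1 c cm b b1 b2) + k1 * e2 c cm b b1 b2 * mu
     + k2 * c ^ 2 * mu ^ 2) / Delta c cm b b1 b2 mu.

Definition N_s (p : params) (mu : R) : R :=
  Nfun (k_s p) (k_s1 p) (k_s2 p) (c_s p) (c_ms p) (beta_s p) (beta_s1 p) (beta_s2 p) mu.
Definition N_z (p : params) (mu : R) : R :=
  Nfun (k_z p) (k_z1 p) (k_z2 p) (c_z p) (c_mz p) (beta_z p) (beta_z1 p) (beta_z2 p) mu.

(* State vectors: x : nat -> R with x 1 = mu34, x 2 = s, x 3 = mu200, x 4 = z
   (1-based indices, as in the paper; other indices are unused). *)
Definition G (p : params) (i : nat) (x : nat -> R) : R :=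
  let mu34 := x 1%nat in let s := x 2%nat in let mu200 := x 3%nat in let z := x 4%nat in
  match i with
  | 1%nat => beta_34 p * E_34 p * A_s p * A_z p / ((s ^ 2 + A_s p) * (z ^ 2 + A_z p))
             - beta_m34 p * mu34
  | 2%nat => gamma_s p * E_S p * A_s p / (s ^ 2 + A_s p) * N_s p mu34 - k_ms p * s
  | 3%nat => beta_200 p * E_200 p * A_s p * A_z p / ((s ^ 2 + A_s p) * (z ^ 2 + A_z p))
             - beta_m200 p * mu200
  | 4%nat => delta_z p
             + gamma_z p * E_Z p * s ^ 2 * z ^ 2 / ((s ^ 2 + A_s p) * (z ^ 2 + A_z p))
               * N_z p mu200
             - k_mz p * z
  | _ => 0
  end.

Definition upd (x : nat -> R) (j : nat) (t : R) : nat -> R :=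
  fun k => if Nat.eqb k j then t else x k.

Definition is_jacobian (p : params) (x : nat -> R) (J : nat -> nat -> R) : Prop :=
  forall i j : nat, (1 <= i <= 4)%nat -> (1 <= j <= 4)%nat ->
    derivable_pt_lim (fun t => G p i (upd x j t)) (x j) (J i j).

Definition sigma (i : nat) : R :=
  match i with 1%nat => -1 | 2%nat => 1 | 3%nat => -1 | 4%nat => 1 | _ => 0 end.

Definition metzler4 (A : nat -> nat -> R) : Prop :=
  forall i j : nat, (1 <= i <= 4)%nat -> (1 <= j <= 4)%nat -> i <> j -> 0 <= A i j.

Definition conj_sigma (J : nat -> nat -> R) : nat -> nat -> R :=
  fun i j => sigma i * J i j * sigma j.

(* A 4x4 matrix is reducible iff there is a nonempty proper subset I of {1..4}
   with A_ij = 0 for all i in I, j not in I (i.e. it can be permuted to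
   block-triangular form); irreducible = not reducible. *)
Definition reducible4 (A : nat -> nat -> R) : Prop :=
  exists I : nat -> bool,
    (exists i, (1 <= i <= 4)%nat /\ I i = true) /\
    (exists j, (1 <= j <= 4)%nat /\ I j = false) /\
    (forall i j, (1 <= i <= 4)%nat -> (1 <= j <= 4)%nat ->
       I i = true -> I j = false -> A i j = 0).
Definition irreducible4 (A : nat -> nat -> R) : Prop := ~ reducible4 A.

(* Main.v *)
Require Import Defs.
From Stdlib Require Import Reals Lra Psatz.
From Coquelicot Require Import Coquelicot.
Open Scope R_scope.

Definition Pn (k k1 k2 c cm b b1 b2 mu : R) : R :=
  k * (b2 * c * mu + e1 c cm b b1 b2) + k1 * e2 c cm b b1 b2 * mu + k2 * c ^ 2 * mu ^ 2.
Definition dNfun (k k1 k2 c cm b b1 b2 mu : R) : R :=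
  ((k * b2 * c + k1 * e2 c cm b b1 b2 + 2 * k2 * c ^ 2 * mu) * Defs.Delta c cm b b1 b2 mu
   - Pn k k1 k2 c cm b b1 b2 mu * (2 * b2 * c ^ 2 * mu + e3 c cm b b1 b2 * c))
  / (Defs.Delta c cm b b1 b2 mu) ^ 2.

Ltac pos := repeat first [ assumption | apply Rplus_lt_0_compat | apply Rmult_lt_0_compat | apply pow_lt | apply Rinv_0_lt_compat | apply Rdiv_lt_0_compat | lra].

Lemma Delta_pos c cm b b1 b2 mu : 0 < c -> 0 < cm -> 0 < b -> 0 < b1 -> 0 < b2 -> 0 < mu ->
  0 < Defs.Delta c cm b b1 b2 mu.
Proof. intros. unfold Defs.Delta, e1, e3. pos. Qed.

Lemma Nfun_pos k k1 k2 c cm b b1 b2 mu : 0 < k -> 0 < k1 -> 0 < k2 -> 0 < c -> 0 < cm -> 0 < b -> 0 < b1 -> 0 < b2 -> 0 < mu ->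
  0 < Nfun k k1 k2 c cm b b1 b2 mu.
Proof. intros. unfold Nfun. apply Rdiv_lt_0_compat; [|apply Delta_pos; auto].
  unfold e1, e2. pos. Qed.

Lemma dN_neg k k1 k2 c cm b b1 b2 mu : 0 < k -> 0 < k1 -> 0 < k2 -> 0 < c -> 0 < cm -> 0 < b -> 0 < b1 -> 0 < b2 -> 0 < mu ->
  b < b1 -> b1 < b2 -> k1 < k -> k2 < k1 ->
  dNfun k k1 k2 c cm b b1 b2 mu < 0.
Proof. intros. unfold dNfun.
  assert (HD := Delta_pos c cm b b1 b2 mu ltac:(auto) ltac:(auto) ltac:(auto) ltac:(auto) ltac:(auto) ltac:(auto)).
  set (u := c * mu).
  set (E1 := e1 c cm b b1 b2).
  assert (HE1 : 0 < E1) by (unfold E1, e1; pos).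
  assert (Hu : 0 < u) by (unfold u; nra).
  assert (Heq : (k * b2 * c + k1 * e2 c cm b b1 b2 + 2 * k2 * c ^ 2 * mu) * Defs.Delta c cm b b1 b2 mu
   - Pn k k1 k2 c cm b b1 b2 mu * (2 * b2 * c ^ 2 * mu + e3 c cm b b1 b2 * c)
   = c * ((k2 * e3 c cm b b1 b2 - b2 * (k * b2 + k1 * (b2 + cm))) * u ^ 2
          + 2 * E1 * (k2 * b - k * b2) * u + E1 * (b2 + cm) * (k1 * b - k * b1))).
  { unfold u, E1, Pn, Defs.Delta, e1, e2, e3. ring. }
  rewrite Heq. unfold Rdiv. 
  assert (A1 : k2 * e3 c cm b b1 b2 - b2 * (k * b2 + k1 * (b2 + cm)) < 0).
  { unfold e3. assert (k2 * (b * b2 + b1 * b2 + b1 * cm) < k1 * (b * b2 + b1 * b2 + b1 * cm)) by (apply Rmult_lt_compat_r; [pos|lra]).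
    assert (k1*b < k*b2) by nra. assert (k1*b*b2 < k*b2*b2) by (apply Rmult_lt_compat_r; lra).
    assert (k1*b1 < k1*b2) by nra. assert (k1*b1*b2 < k1*b2*b2) by (apply Rmult_lt_compat_r; lra).
    assert (k1*b1*cm < k1*b2*cm) by (apply Rmult_lt_compat_r; lra). nra. }
  assert (A2 : k2 * b - k * b2 < 0) by nra.
  assert (A3 : k1 * b - k * b1 < 0) by nra.
  apply Rmult_neg_pos; [|apply Rinv_0_lt_compat; apply pow_lt; auto].
  apply Rmult_pos_neg; auto.
  assert (0 < u^2) by (apply pow_lt; auto).
  assert (0 < E1 * (b2+cm)) by nra.
  assert (0 < E1 * u) by nra.
  nra.
Qed.

Lemma Nfun_deriv k k1 k2 c cm b b1 b2 mu : Defs.Delta c cm b b1 b2 mu <> 0 ->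
  is_derive (Nfun k k1 k2 c cm b b1 b2) mu (dNfun k k1 k2 c cm b b1 b2 mu).
Proof. intros HD. unfold Nfun, dNfun, Pn. unfold Defs.Delta in *. auto_derive.
  - auto.
  - unfold e1, e2, e3 in *. field. auto.
Qed.

Lemma Derive_N k k1 k2 c cm b b1 b2 mu : Defs.Delta c cm b b1 b2 mu <> 0 ->
  Derive (fun t => Nfun k k1 k2 c cm b b1 b2 t) mu = dNfun k k1 k2 c cm b b1 b2 mu.
Proof. intros. apply is_derive_unique. apply Nfun_deriv. auto. Qed.

Lemma neg_frac a d : 0 < a -> 0 < d -> - a / d < 0.
Proof. intros. unfold Rdiv. assert (0 < a * / d) by pos. lra. Qed.

Theorem mainTheorem2 (p : params) (Hp : valid_params p) (x : nat -> R)
  (Hx : forall k : nat, (1 <= k <= 4)%nat -> 0 < x k) :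
  exists J : nat -> nat -> R,
    is_jacobian p x J /\
    J 1%nat 3%nat = 0 /\ J 2%nat 3%nat = 0 /\ J 2%nat 4%nat = 0 /\
    J 3%nat 1%nat = 0 /\ J 4%nat 1%nat = 0 /\
    J 1%nat 2%nat < 0 /\ J 1%nat 4%nat < 0 /\ J 3%nat 2%nat < 0 /\ J 3%nat 4%nat < 0 /\
    J 2%nat 1%nat < 0 /\ J 4%nat 3%nat < 0 /\
    0 < J 4%nat 2%nat /\
    metzler4 (conj_sigma J) /\
    irreducible4 J.
Proof.
  destruct Hp as (HAs & HAz & HE34 & HE200 & HES & HEZ & Hb34 & Hbm34 & Hb200 & Hbm200 &
    Hgs & Hgz & Hcs & Hcms & Hcz & Hcmz & Hbs & Hbs1 & Hbs2 & Hbz & Hbz1 & Hbz2 &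
    Hks & Hks1 & Hks2 & Hkms & Hkz & Hkz1 & Hkz2 & Hkmz & Hdz & O1 & O2 & O3 & O4 & O5 & O6 & O7 & O8).
  pose proof (Hx 1%nat ltac:(lia)) as H1.
  pose proof (Hx 2%nat ltac:(lia)) as H2.
  pose proof (Hx 3%nat ltac:(lia)) as H3.
  pose proof (Hx 4%nat ltac:(lia)) as H4.
  set (m1 := x 1%nat) in *. set (s := x 2%nat) in *. set (m2 := x 3%nat) in *. set (z := x 4%nat) in *.
  pose proof (Delta_pos (c_s p) (c_ms p) (beta_s p) (beta_s1 p) (beta_s2 p) m1 Hcs Hcms Hbs Hbs1 Hbs2 H1) as HD1.
  pose proof (Delta_pos (c_z p) (c_mz p) (beta_z p) (beta_z1 p) (beta_z2 p) m2 Hcz Hcmz Hbz Hbz1 Hbz2 H3) as HD2.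
  assert (HS : 0 < s^2 + A_s p) by pos.
  assert (HZ : 0 < z^2 + A_z p) by pos.
  exists (fun i j => Derive (fun t => G p i (upd x j t)) (x j)).
  assert (Hder : forall i j, (1 <= i <= 4)%nat -> (1 <= j <= 4)%nat ->
     ex_derive (fun t => G p i (upd x j t)) (x j)).
  { intros i j Hi Hj.
    destruct i as [|[|[|[|[|i]]]]]; try lia; destruct j as [|[|[|[|[|j]]]]]; try lia;
    unfold G, upd, N_s, N_z; simpl; fold m1 s m2 z;
    auto_derive; repeat split; try (apply Rgt_not_eq; pos);
    eexists; apply Nfun_deriv; lra. }
  assert (HdN1 := dN_neg _ _ _ _ _ _ _ _ m1 Hks Hks1 Hks2 Hcs Hcms Hbs Hbs1 Hbs2 H1 O1 O2 O5 O6).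
  assert (HdN2 := dN_neg _ _ _ _ _ _ _ _ m2 Hkz Hkz1 Hkz2 Hcz Hcmz Hbz Hbz1 Hbz2 H3 O3 O4 O7 O8).
  assert (HN2 := Nfun_pos _ _ _ _ _ _ _ _ m2 Hkz Hkz1 Hkz2 Hcz Hcmz Hbz Hbz1 Hbz2 H3).
  set (S := s^2 + A_s p) in *. set (Z := z^2 + A_z p) in *.
  assert (J13 : Derive (fun t => G p 1 (upd x 3 t)) (x 3%nat) = 0).
  { unfold G, upd; simpl. apply Derive_const. }
  assert (J23 : Derive (fun t => G p 2 (upd x 3 t)) (x 3%nat) = 0).
  { unfold G, upd; simpl. apply Derive_const. }
  assert (J24 : Derive (fun t => G p 2 (upd x 4 t)) (x 4%nat) = 0).
  { unfold G, upd; simpl. apply Derive_const. }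
  assert (J31 : Derive (fun t => G p 3 (upd x 1 t)) (x 1%nat) = 0).
  { unfold G, upd; simpl. apply Derive_const. }
  assert (J41 : Derive (fun t => G p 4 (upd x 1 t)) (x 1%nat) = 0).
  { unfold G, upd; simpl. apply Derive_const. }
  assert (J12 : Derive (fun t => G p 1 (upd x 2 t)) (x 2%nat) < 0).
  { replace (Derive _ _) with (- (beta_34 p * E_34 p * A_s p * A_z p * (2 * s * Z)) / (S * Z)^2).
    { apply neg_frac; pos. }
    symmetry. apply is_derive_unique. unfold G, upd; simpl. fold m1 s m2 z. auto_derive.
    - unfold S, Z in *. repeat split; apply Rgt_not_eq; pos.
    - unfold S, Z in *. field. split; apply Rgt_not_eq; pos. }
  assert (J14 : Derive (fun t => G p 1 (upd x 4 t)) (x 4%nat) < 0).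
  { replace (Derive _ _) with (- (beta_34 p * E_34 p * A_s p * A_z p * (2 * z * S)) / (S * Z)^2).
    { apply neg_frac; pos. }
    symmetry. apply is_derive_unique. unfold G, upd; simpl. fold m1 s m2 z. auto_derive.
    - unfold S, Z in *. repeat split; apply Rgt_not_eq; pos.
    - unfold S, Z in *. field. split; apply Rgt_not_eq; pos. }
  assert (J32 : Derive (fun t => G p 3 (upd x 2 t)) (x 2%nat) < 0).
  { replace (Derive _ _) with (- (beta_200 p * E_200 p * A_s p * A_z p * (2 * s * Z)) / (S * Z)^2).
    { apply neg_frac; pos. }
    symmetry. apply is_derive_unique. unfold G, upd; simpl. fold m1 s m2 z. auto_derive.
    - unfold S, Z in *. repeat split; apply Rgt_not_eq; pos.
    - unfold S, Z in *. field. split; apply Rgt_not_eq; pos. }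
  assert (J34 : Derive (fun t => G p 3 (upd x 4 t)) (x 4%nat) < 0).
  { replace (Derive _ _) with (- (beta_200 p * E_200 p * A_s p * A_z p * (2 * z * S)) / (S * Z)^2).
    { apply neg_frac; pos. }
    symmetry. apply is_derive_unique. unfold G, upd; simpl. fold m1 s m2 z. auto_derive.
    - unfold S, Z in *. repeat split; apply Rgt_not_eq; pos.
    - unfold S, Z in *. field. split; apply Rgt_not_eq; pos. }
  assert (J21 : Derive (fun t => G p 2 (upd x 1 t)) (x 1%nat) < 0).
  { replace (Derive _ _) with (gamma_s p * E_S p * A_s p / S *
       dNfun (k_s p) (k_s1 p) (k_s2 p) (c_s p) (c_ms p) (beta_s p) (beta_s1 p) (beta_s2 p) m1).
    { apply Rmult_pos_neg; [pos|exact HdN1]. }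
    symmetry. apply is_derive_unique. unfold G, upd, N_s; simpl. fold m1 s m2 z.
    auto_derive.
    - repeat split. eexists; apply Nfun_deriv; lra.
    - rewrite (Derive_N (k_s p) (k_s1 p) (k_s2 p) (c_s p) (c_ms p) (beta_s p) (beta_s1 p) (beta_s2 p) m1 ltac:(lra)). unfold S, Z in *. field. repeat split; apply Rgt_not_eq; pos. }
  assert (J43 : Derive (fun t => G p 4 (upd x 3 t)) (x 3%nat) < 0).
  { replace (Derive _ _) with (gamma_z p * E_Z p * s ^ 2 * z ^ 2 / (S * Z) *
       dNfun (k_z p) (k_z1 p) (k_z2 p) (c_z p) (c_mz p) (beta_z p) (beta_z1 p) (beta_z2 p) m2).
    { apply Rmult_pos_neg; [pos|exact HdN2]. }
    symmetry. apply is_derive_unique. unfold G, upd, N_z; simpl. fold m1 s m2 z S Z.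
    auto_derive.
    - repeat split. eexists; apply Nfun_deriv; lra.
    - rewrite (Derive_N (k_z p) (k_z1 p) (k_z2 p) (c_z p) (c_mz p) (beta_z p) (beta_z1 p) (beta_z2 p) m2 ltac:(lra)). unfold S, Z in *. field. repeat split; apply Rgt_not_eq; pos. }
  assert (J42 : 0 < Derive (fun t => G p 4 (upd x 2 t)) (x 2%nat)).
  { set (NZ := N_z p m2) in *.
    replace (Derive _ _) with (gamma_z p * E_Z p * z ^ 2 * (2 * s * A_s p) / (S ^ 2 * Z) * NZ).
    { unfold NZ, N_z. pos. }
    symmetry. apply is_derive_unique. unfold G, upd; simpl. fold m1 s m2 z NZ. auto_derive.
    - unfold S, Z in *. repeat split; apply Rgt_not_eq; pos.
    - unfold S, Z in *. field. split; apply Rgt_not_eq; pos. }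
  cbv beta.
  split; [|split; [exact J13|split; [exact J23|split; [exact J24|split; [exact J31|split; [exact J41|]]]]]].
  { intros i j Hi Hj. apply is_derive_Reals. apply Derive_correct. apply Hder; auto. }
  repeat (split; [assumption|]).
  split.
  { intros i j Hi Hj Hij. unfold conj_sigma. cbv beta.
    destruct i as [|[|[|[|[|i]]]]]; try lia; destruct j as [|[|[|[|[|j]]]]]; try lia;
    cbn [Defs.sigma]; lra. }
  intros [I [[i [Hi Ii]] [[j [Hj Ij]] HI]]].
  assert (E : forall a b, (1 <= a <= 4)%nat -> (1 <= b <= 4)%nat ->
     Derive (fun t => G p a (upd x b t)) (x b) <> 0 -> I a = true -> I b = true).
  { intros a b Ha Hb Hne Ia. destruct (I b) eqn:Ib; [reflexivity|]. exfalso. apply Hne. apply (HI a b); auto. }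
  assert (E12 := E 1%nat 2%nat ltac:(lia) ltac:(lia) ltac:(lra)).
  assert (E14 := E 1%nat 4%nat ltac:(lia) ltac:(lia) ltac:(lra)).
  assert (E21 := E 2%nat 1%nat ltac:(lia) ltac:(lia) ltac:(lra)).
  assert (E32 := E 3%nat 2%nat ltac:(lia) ltac:(lia) ltac:(lra)).
  assert (E43 := E 4%nat 3%nat ltac:(lia) ltac:(lia) ltac:(lra)).
  assert (E42 := E 4%nat 2%nat ltac:(lia) ltac:(lia) ltac:(lra)).
  assert (Hall1 : I 1%nat = true).
  { destruct i as [|[|[|[|[|i]]]]]; try lia; auto. }
  assert (Hall : forall k, (1 <= k <= 4)%nat -> I k = true).
  { intros k Hk. destruct k as [|[|[|[|[|k]]]]]; try lia; auto. }
  rewrite Hall in Ij; [discriminate|exact Hj].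
Qed.
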